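(* Let $\delta\in(0,1)$, $\epsilon>0$, $\gamma^*\ge0$, and consider the progressive sampling algorithm PS-REG (described in the context) run on a simulation-based game with these parameters. If PS-REG returns an empirical utility function $\hat u$, then with probability at least $1-\delta$ it holds that $E(u)\subseteq E_{2\epsilon}(\hat u)$ and $E_\gamma(\hat u)\subseteq E_{2\epsilon+\gamma}(u)$ for all $0\le\gamma\le\gamma^*$, where $u$ is the true utility function.
   Context: Games. A normal-form game has a finite set of players $P$, finite pure strategy sets $S_p$, pure profile space $\mathbf{S}=\prod_pS_p$ and utility $u:\mathbf{S}\to\mathbb{R}^{|P|}$. For a profile $s$ and player $p$, $A_{p,s}$ is the set of pure profiles obtained from $s$ by replacing $p$'s strategy by any $t\in S_p$. $\mathrm{Reg}_p(s;u)=\sup_{s'\in A_{p,s}}u_p(s')-u_p(s)$, $\mathrm{Reg}(s;u)=\max_p\mathrm{Reg}_p(s;u)$; $E_\gamma(u)=\{s\in\mathbf{S}:\mathrm{Reg}(s;u)\le\gamma\}$, $E(u)=E_0(u)$. Simulation-based game: a simulator which, queried at a pure profile $s$, returns an independent random utility vector with coordinates in $[a_s,b_s]$; $c=\sup_s(b_s-a_s)$; the true utility $u(s)$ is the expected simulator output. Index set $\mathcal{I}=P\times\mathbf{S}$. Progressive sampling algorithm: schedule $m_1,\dots,m_T$, $M_t=m_1+\dots+m_t$. All indices start active. At iteration $t$, for each active $(p,s)$, draw $m_t$ fresh samples of $p$'s utility at $s$, let $\hat u^{(t)}_p(s)$ be the mean of all $M_t$ samples, and compute a deviation bound $\hat\epsilon^{(t)}_p(s)$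 with $|u_p(s)-\hat u^{(t)}_p(s)|\le\hat\epsilon^{(t)}_p(s)$ with probability at least $1-\delta/(|\mathcal{I}|T)$. Pruned indices are no longer sampled and retain their last values. After pruning, if no index is active the algorithm returns $\hat u=\hat u^{(t)}$; if the schedule is exhausted with active indices it returns nothing. PS-REG uses uniform deviation bounds (a single scalar $\hat\epsilon^{(t)}$ at iteration $t$ serving as the bound of every index). At iteration $t$ it prunes an active index $(p,s)$ if $\hat\epsilon^{(t)}\le\epsilon$ (well-estimated pruning) or if $\mathrm{Reg}_p(s;\hat u^{(t)})>\max\{2\hat\epsilon^{(t)},\ \gamma^*+\epsilon+\hat\epsilon^{(t)}\}$ (regret pruning). *)

(* Defs.v *)
From HB Require Import structures.
From mathcomp Require Import all_boot all_order all_algebra.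
From mathcomp Require Import all_classical all_reals.
From mathcomp Require Import measure probability_measure.
Set Implicit Arguments. Unset Strict Implicit. Unset Printing Implicit Defensive.
Import Order.TTheory GRing.Theory Num.Theory.
Local Open Scope ring_scope.

Section Games.
Variables (R : realType) (P : finType) (S : P -> finType).

Definition gprofile := {dffun forall p : P, S p}.
Definition gindex := (P * gprofile)%type.

Definition deviation (p : P) (s s' : gprofile) : bool :=
  [forall q : P, (q != p) ==> (s' q == s q)].

(* Reg_p(s;u) = sup_{s' in A_{p,s}} u_p(s') - u_p(s)  (finite; s in A_{p,s}) *)
Definition Regp (u : P -> gprofile -> R) (p : P) (s : gprofile) : R :=
  \big[Num.max/0]_(s' | deviation p s s') (u p s' - u p s).

Definition Reg (u : P -> gprofile -> R) (s : gprofile) : R :=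
  \big[Num.max/0]_(p : P) Regp u p s.

Definition Eg (gamma : R) (u : P -> gprofile -> R) : {set gprofile} :=
  [set s | Reg u s <= gamma].

Definition E0 (u : P -> gprofile -> R) : {set gprofile} := Eg 0 u.

Definition util_of (v : gindex -> R) : P -> gprofile -> R := fun p s => v (p, s).

(* Samples: X k i w is the k-th (k = 0,1,...) sample of
   gindex i = (p,s) (player p's utility at s) in outcome w. *)
Definition Msum (m : nat -> nat) (t : nat) : nat := \sum_(1 <= k < t.+1) m k.

Definition uhat {T : Type} (m : nat -> nat) (X : nat -> gindex -> T -> R)
  (t : nat) (i : gindex) (w : T) : R :=
  (Msum m t)%:R^-1 * \sum_(k < Msum m t) X k i w.

(* PS-REG pruning rule for an active gindex i at iteration t, with uniform
   bound e = eps^(t) and current empirical utility cur = uhat^(t). *)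
Definition psreg_prune (eps_tgt gstar : R) (e : R) (cur : gindex -> R)
  (i : gindex) : bool :=
  (e <= eps_tgt) ||
  (Num.max (2 * e) (gstar + eps_tgt + e) < Regp (util_of cur) i.1 i.2).

(* The loop: k remaining iterations, t current iteration number,
   act the active indices, cur the current (retained) values. *)
Fixpoint psreg_loop {T : Type} (eps_tgt gstar : R) (m : nat -> nat)
  (X : nat -> gindex -> T -> R) (eps : nat -> T -> R) (w : T)
  (k t : nat) (act : {set gindex}) (cur : gindex -> R) : option (gindex -> R) :=
  match k with
  | 0 => None
  | k'.+1 =>
    let cur' := fun i => if i \in act then uhat m X t i w else cur i in
    let e := eps t w in
    let act' := [set i in act | ~~ psreg_prune eps_tgt gstar e cur' i] in
    if act' == finset.set0 then Some cur'
    else psreg_loop eps_tgt gstar m X eps w k' t.+1 act' cur'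
  end.

(* PS-REG run with schedule of length T on outcome w; None = returns nothing. *)
Definition psreg {T : Type} (eps_tgt gstar : R) (Tn : nat) (m : nat -> nat)
  (X : nat -> gindex -> T -> R) (eps : nat -> T -> R) (w : T)
  : option (P -> gprofile -> R) :=
  omap util_of
    (psreg_loop eps_tgt gstar m X eps w Tn 1 [set: gindex] (fun _ => 0)).

End Games.

(* Main.v *)
Require Import Defs.
From HB Require Import structures.
From mathcomp Require Import all_boot all_order all_algebra.
From mathcomp Require Import all_classical all_reals.
From mathcomp Require Import measure probability_measure.
From mathcomp Require Import ring lra zify.
Set Implicit Arguments. Unset Strict Implicit. Unset Printing Implicit Defensive.
Import Order.TTheory GRing.Theory Num.Theory.
Local Open Scope ring_scope.
Local Open Scope classical_set_scope.

Lemma arith1 (R : realType) (x y z M ee eps gstar : R) :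
  2 * ee < x - y -> gstar + eps + ee < x - y -> z - ee <= y -> y <= z + ee ->
  x <= M + ee -> 0 <= ee -> 0 < eps -> 0 <= gstar ->
  z < M /\ y < M - gstar - eps.
Proof. move=> h1 h2 h3 h4 h5 h6 h7 h8; split; lra. Qed.

Section Det.
Variables (R : realType) (P : finType) (S : P -> finType).

Lemma dev_refl p (s : gprofile S) : deviation p s s.
Proof. by apply/forallP => q; apply/implyP. Qed.

Lemma dev_sym p (s s' : gprofile S) : deviation p s s' -> deviation p s' s.
Proof.
move/forallP => H; apply/forallP => q; apply/implyP => hq.
by move/implyP: (H q) => /(_ hq) /eqP ->.
Qed.

Lemma dev_trans p (s1 s2 s3 : gprofile S) :
  deviation p s1 s2 -> deviation p s2 s3 -> deviation p s1 s3.
Proof.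
move/forallP => H1 /forallP H2; apply/forallP => q; apply/implyP => hq.
move/implyP: (H1 q) => /(_ hq) /eqP <-.
by move/implyP: (H2 q) => /(_ hq).
Qed.

Lemma Regp_le (f : P -> gprofile S -> R) p s c : 0 <= c ->
  (forall s', deviation p s s' -> f p s' - f p s <= c) -> Regp f p s <= c.
Proof. by move=> c0 H; apply: bigmax_le. Qed.

Lemma Regp_ge (f : P -> gprofile S -> R) p s s' :
  deviation p s s' -> f p s' - f p s <= Regp f p s.
Proof. by move=> d; apply: (le_bigmax_cond _ _ d). Qed.

Lemma Regp_wit (f : P -> gprofile S -> R) p s c : c < Regp f p s ->
  exists2 s', deviation p s s' & c < f p s' - f p s.
Proof.
move=> lt; case: (boolp.pselect (exists2 s', deviation p s s' & c < f p s' - f p s)) => // H.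
exfalso.
have all : forall s', deviation p s s' -> f p s' - f p s <= c.
  move=> s' d; rewrite leNgt; apply/negP => l; apply: H; by exists s'.
have c0 : 0 <= c by move: (all s (dev_refl p s)); rewrite subrr.
by move: (Regp_le c0 all); rewrite leNgt lt.
Qed.

Lemma Reg_le (f : P -> gprofile S -> R) s c : 0 <= c ->
  (forall p, Regp f p s <= c) -> Reg f s <= c.
Proof. by move=> c0 H; apply: bigmax_le. Qed.

Lemma Regp_le_Reg (f : P -> gprofile S -> R) p s : Regp f p s <= Reg f s.
Proof. exact: (le_bigmax _ (fun p => Regp f p s)). Qed.

Variables (u : P -> gprofile S -> R) (eps gstar : R).
Hypothesis heps : 0 < eps.
Hypothesis hg : 0 <= gstar.

Definition sarg p s := Order.arg_max s (fun s' => deviation p s s') (fun s' => u p s').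
Definition umax p s := u p (sarg p s).

Lemma sarg_spec p s : deviation p s (sarg p s) /\
  forall s', deviation p s s' -> u p s' <= u p (sarg p s).
Proof.
rewrite /sarg; case: arg_maxP => [|a da H]; first exact: dev_refl.
by split.
Qed.

Lemma umax_ge p s s' : deviation p s s' -> u p s' <= umax p s.
Proof. by case: (sarg_spec p s) => _ H /H. Qed.

Lemma umax_dev p s s' : deviation p s s' -> umax p s' = umax p s.
Proof.
move=> d; apply/le_anti/andP; split.
  apply: umax_ge; apply: (dev_trans d); exact: (sarg_spec p s').1.
apply: umax_ge; apply: (dev_trans (dev_sym d)); exact: (sarg_spec p s).1.
Qed.

Definition Good (i : gindex S) (v : R) :=
  `|u i.1 i.2 - v| <= eps \/
  (u i.1 i.2 < umax i.1 i.2 /\ v < umax i.1 i.2 - gstar - eps).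

Lemma final (uh : gindex S -> R) : (forall i, Good i (uh i)) ->
  (E0 u \subset Eg (2 * eps) (util_of uh)) /\
  (forall gamma : R, 0 <= gamma <= gstar ->
     Eg gamma (util_of uh) \subset Eg (2 * eps + gamma) u).
Proof.
move=> G; split.
  apply/fintype.subsetP => s; rewrite !inE => H0.
  have Hu : forall p s', deviation p s s' -> u p s' <= u p s.
    move=> p s' d; rewrite -subr_le0.
    exact: (le_trans (Regp_ge u d) (le_trans (Regp_le_Reg u p s) H0)).
  apply: Reg_le; first by rewrite mulr_ge0 // ltW.
  move=> p; apply: Regp_le; first by rewrite mulr_ge0 // ltW.
  move=> s' d; rewrite /util_of.
  have um : umax p s = u p s.
    apply/le_anti/andP; split; first by apply: Hu; exact: (sarg_spec p s).1.
    by apply: umax_ge; exact: dev_refl.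
  have A : u p s - eps <= uh (p, s).
    case: (G (p, s)) => /= [|[]]; last by rewrite um ltxx.
    by rewrite ler_distlC => /andP[].
  have B : uh (p, s') <= u p s + eps.
    case: (G (p, s')) => /= [|[_]].
      rewrite ler_distlC => /andP[_ h]; apply: (le_trans h); rewrite lerD2r; exact: Hu.
    rewrite (umax_dev d) um => h. move: h heps hg; move: (uh (p, s')) (u p s) => x y; lra.
  move: A B heps; move: (uh (p, s')) (uh (p, s)) (u p s) => x y z; lra.
move=> gamma /andP[g0 gg]; apply/fintype.subsetP => s; rewrite !inE => Hg.
have Hh : forall p s', deviation p s s' -> uh (p, s') - uh (p, s) <= gamma.
  move=> p s' d; exact: (le_trans (Regp_ge (util_of uh) d) (le_trans (Regp_le_Reg _ p s) Hg)).
have c0 : 0 <= 2 * eps + gamma by rewrite addr_ge0 // mulr_ge0 // ltW.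
apply: Reg_le => // p; apply: Regp_le => // s' d.
case: (sarg_spec p s) => ds _.
set a := sarg p s in ds *.
have Ga : umax p s - eps <= uh (p, a).
  have ua : u p a = umax p s by [].
  case: (G (p, a)) => /= [|[]].
    by rewrite ua ler_distlC => /andP[].
  by rewrite (umax_dev ds) ua ltxx.
have ha := Hh p a ds.
case: (G (p, s)) => /= [|[_ h]].
  rewrite ler_distlC => /andP[_ h].
  have h2 := umax_ge d.
  move: h h2 Ga ha heps g0; move: (umax p s) (uh (p, a)) (uh (p, s)) (u p s) (u p s') => M x y z z'.
  lra.
exfalso; move: h Ga ha gg heps; move: (umax p s) (uh (p, a)) (uh (p, s)) => M x y.
lra.
Qed.


Variables (m : nat -> nat) (T : Type) (X : nat -> gindex S -> T -> R)
  (epsb : nat -> T -> R) (w : T) (Tn : nat).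
Hypothesis acc : forall t, (1 <= t <= Tn)%N -> forall i : gindex S,
  `|u i.1 i.2 - uhat m X t i w| <= epsb t w.

Lemma loop_good k t (act : {set gindex S}) (cur : gindex S -> R) v : (1 <= t)%N -> (t + k <= Tn.+1)%N ->
  (forall i, i \notin act -> Good i (cur i)) ->
  psreg_loop eps gstar m X epsb w k t act cur = Some v -> forall i, Good i (v i).
Proof.
elim: k t act cur => [|k IH] t act cur t1 tk Inv //=.
set cur' := (fun i => if _ then _ else _).
set e := epsb t w.
have ht : (1 <= t <= Tn)%N by apply/andP; split => //; lia.
have Inv' : forall i, i \notin [set i in act | ~~ psreg_prune eps gstar e cur' i] ->
    Good i (cur' i).
  move=> [p s]; rewrite inE negb_and negbK.
  case ia: ((p,s) \in act) => /=; last first.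
    by move=> _; rewrite /cur' ia; apply: Inv; rewrite ia.
  move=> pr.
  have cu : cur' (p,s) = uhat m X t (p,s) w by rewrite /cur' ia.
  have a := acc ht (p,s).
  rewrite cu.
  case: (leP e eps) => le.
    by left; exact: le_trans a le.
  move: pr; rewrite /psreg_prune leNgt le /= => lt.
  right.
  case: (Regp_wit lt) => d dd; rewrite /util_of /= => hd.
  have e0 : 0 <= e := le_trans (normr_ge0 _) a.
  have bd : cur' (p,d) <= umax p s + e.
    rewrite /cur'; case: ifP => idn.
      have := acc ht (p,d); rewrite -/e ler_distlC => /andP[_ h].
      have := umax_ge dd; move: h; move: (uhat m X t (p, d) w) (u p d) (umax p s) => x y z.
      lra.
    have := Inv (p,d); rewrite idn => /(_ isT); case => /= [|[h1 h2]].
      rewrite ler_distlC => /andP[_ h].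
      have := umax_ge dd; move: h le; move: (cur (p, d)) (u p d) (umax p s) => x y z.
      lra.
    rewrite (umax_dev dd) in h1 h2.
    move: h2 e0 heps hg; move: (cur (p, d)) (umax p s) => x y; lra.
  rewrite cu in hd.
  have hd1 : 2 * e < cur' (p, d) - uhat m X t (p, s) w.
    by apply: le_lt_trans hd; rewrite le_max lexx.
  have hd2 : gstar + eps + e < cur' (p, d) - uhat m X t (p, s) w.
    by apply: le_lt_trans hd; rewrite le_max lexx orbT.
  move: a; rewrite -/e ler_distlC => /andP[a1 a2].
  move: hd1 hd2 a1 a2 bd e0 heps hg; clear le lt hd.
  move: (cur' (p, d)) (uhat m X t (p, s) w) (u p s) (umax p s) e => x y z M ee.
  exact: arith1.
case: ifP => [/eqP E [<-] i|_ H].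
  by apply: Inv'; rewrite E inE.
apply: (IH t.+1 _ _ (ltn0Sn t) _ Inv' H).
by rewrite addSn -addnS.
Qed.

End Det.

Lemma union_bound (d : measure_display) (Omega : measurableType d) (R : realType)
  (Pr : probability Omega R) (K : eqType) (a : R) (s : seq K) (B : K -> set Omega) :
  (forall k, k \in s -> measurable (B k) /\ ((1 - a)%:E <= Pr (B k))%E) ->
  measurable (\big[setU/set0]_(k <- s) ~` B k) /\
  (Pr (\big[setU/set0]_(k <- s) ~` B k) <= ((size s)%:R * a)%:E)%E.
Proof.
elim: s => [|k s IH] H.
  by rewrite big_nil measure0 mul0r; split.
have [mk hk] := H k (mem_head _ _).
have [mU hU] := IH (fun k' hk' => H k' (mem_behead (s := k :: s) hk')).
rewrite big_cons; split.
  by apply: measurableU => //; apply: measurableC.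
have hCk : (Pr (~` B k) <= a%:E)%E.
  rewrite (probability_setC Pr mk).
  have fk := fin_num_measure Pr _ mk.
  rewrite -(fineK fk) in hk *.
  move: hk; rewrite lee_fin => hk.
  rewrite -EFinB lee_fin; lra.
apply: (le_trans (measureU2 _ (measurableC mk) mU)).
apply: (le_trans (leeD hCk hU)).
by rewrite -EFinD lee_fin /= -addn1 natrD mulrDl mul1r addrC.
Qed.

Lemma sub_bigU (Omega : Type) (K : eqType) (s : seq K) (B : K -> set Omega) k :
  k \in s -> ~` B k `<=` \big[setU/set0]_(k <- s) ~` B k.
Proof.
elim: s => [|k' s IH] //; rewrite in_cons big_cons => /orP [/eqP ->|hk].
  exact: subsetUl.
apply: subset_trans (IH hk) _; exact: subsetUr.
Qed.

Theorem theorem6 (R : realType) (P : finType) (S : P -> finType)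
  (d : measure_display) (Omega : measurableType d) (Pr : probability Omega R)
  (delta eps_tgt gstar : R)
  (hdelta : 0 < delta < 1) (heps : 0 < eps_tgt) (hgstar : 0 <= gstar)
  (Tn : nat) (m : nat -> nat)
  (X : nat -> gindex S -> Omega -> R) (epsb : nat -> Omega -> R)
  (u : P -> gprofile S -> R)
  (hbound : forall t : nat, (1 <= t <= Tn)%N -> forall i : gindex S,
     exists B : set Omega, measurable B /\
       B `<=` [set w | `|u i.1 i.2 - uhat m X t i w| <= epsb t w] /\
       ((1 - delta / (#|{: gindex S}|%:R * Tn%:R))%:E <= Pr B)%E) :
  exists G : set Omega, measurable G /\ ((1 - delta)%:E <= Pr G)%E /\
    forall w, G w -> forall uh, psreg eps_tgt gstar Tn m X epsb w = Some uh ->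
      (E0 u \subset Eg (2 * eps_tgt) uh) /\
      (forall gamma : R, 0 <= gamma <= gstar ->
         Eg gamma uh \subset Eg (2 * eps_tgt + gamma) u).
Proof.
set a := delta / (#|{: gindex S}|%:R * Tn%:R).
have hB : forall k : nat * gindex S, exists B : set Omega,
  (1 <= k.1 <= Tn)%N -> measurable B /\
    B `<=` [set w | `|u k.2.1 k.2.2 - uhat m X k.1 k.2 w| <= epsb k.1 w] /\
    ((1 - a)%:E <= Pr B)%E.
  move=> [t i]; case: (boolp.pselect ((1 <= t <= Tn)%N)) => h.
    by have [B HB] := hbound t h i; exists B.
  by exists setT.
case: (boolp.choice hB) => Bf hBf.
pose s := [seq (t, i) | t <- iota 1 Tn, i <- enum {: gindex S}].
have mem_s : forall k, k \in s -> (1 <= k.1 <= Tn)%N.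
  move=> [t i] /allpairsP [[t' i'] [ht _ [-> _]]] /=.
  move: ht; rewrite mem_iota /= => /andP[h1 h2]; apply/andP; split => //.
have in_s : forall t i, (1 <= t <= Tn)%N -> (t, i) \in s.
  move=> t i h; apply/allpairsP; exists (t, i); split => //.
    case/andP: h => h1 h2; rewrite mem_iota /= h1 /=; by rewrite add1n ltnS.
  by rewrite mem_enum.
have [mU hU] := @union_bound d Omega R Pr _ a s Bf
  (fun k hk => let H := hBf k (mem_s k hk) in conj H.1 H.2.2).
exists (~` \big[setU/set0]_(k <- s) ~` Bf k); split; first exact: measurableC.
split.
  rewrite (probability_setC Pr mU).
  have fU := fin_num_measure Pr _ mU.
  rewrite -(fineK fU) in hU *.
  move: hU; rewrite lee_fin => hU.
  have hsa : (size s)%:R * a <= delta.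
    rewrite size_allpairs size_iota -cardE /a.
    case: (posnP (#|{: gindex S}| * Tn)%N) => h0.
      rewrite mulnC h0 mul0r; case/andP: hdelta => h1 _; exact: ltW.
    rewrite mulnC natrM mulrC -mulrA mulVf ?mulr1 //.
    by rewrite -natrM pnatr_eq0 -lt0n.
  rewrite -EFinB lee_fin.
  move: hU hsa; move: (fine _) ((size s)%:R * a) => x y; lra.
move=> w Gw uh Hps.
have acc : forall t, (1 <= t <= Tn)%N -> forall i : gindex S,
    `|u i.1 i.2 - uhat m X t i w| <= epsb t w.
  move=> t h i.
  have hs := in_s t i h.
  have Bw : Bf (t, i) w.
    apply: boolp.contrapT => nB; apply: Gw; exact: (sub_bigU hs nB).
  exact: ((hBf (t, i) h).2.1 w Bw).
move: Hps; rewrite /psreg.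
case E: (psreg_loop _ _ _ _ _ _ _ _ _ _) => [v|] //= [<-].
apply: (final heps hgstar).
apply: (loop_good heps hgstar acc _ _ _ E) => //.
by move=> i; rewrite inE.
Qed.
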